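(* Let $\alpha$ be Diophantine, $\theta\in\mathbb{R}$ and $\epsilon_0>0$. There exists $c=c(\alpha,\epsilon_0)>0$ such that, with $0=n_0,n_1,n_2,\dots$ the $\epsilon_0$-resonances associated to $\alpha$ and $\theta$ ordered so that $|n_0|<|n_1|\le|n_2|\le\cdots$ (with the convention $|n_{j+1}|=\infty$ if $n_j$ is the last resonance), one has for every $j$ $$|n_{j+1}|\ge c\,\|2\theta-n_j\alpha\|_{\mathbb{R}/\mathbb{Z}}^{-c}\ge c\,e^{c\epsilon_0|n_j|}.$$
   Context: An irrational $\alpha$ is Diophantine if $\sup_n\ln q_{n+1}/\ln q_n<\infty$, where $q_n$ are the denominators of its continued fraction approximants. $\|\cdot\|_{\mathbb{R}/\mathbb{Z}}$ is the distance to the nearest integer. Given $\alpha,\theta,\epsilon_0$, an integer $k$ is an $\epsilon_0$-resonance if $\|2\theta-k\alpha\|_{\mathbb{R}/\mathbb{Z}}\le e^{-|k|\epsilon_0}$ and $\|2\theta-k\alpha\|_{\mathbb{R}/\mathbb{Z}}=\min_{|j|\le|k|}\|2\theta-j\alpha\|_{\mathbb{R}/\mathbb{Z}}$ ($0$ is always a resonance). *)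

(* Defs.v *)
From Stdlib Require Import Reals Lra Lia ZArith.
Open Scope R_scope.

Definition distZ (x : R) : R := Rmin (frac_part x) (1 - frac_part x).

Definition irrational (a : R) : Prop :=
  forall (p q : Z), q <> 0%Z -> a <> IZR p / IZR q.

(* Continued fraction expansion via the Gauss map:
   x_0 = frac(alpha), a_{n+1} = floor(1/x_n), x_{n+1} = frac(1/x_n),
   q_{-1} = 0, q_0 = 1, q_{n+1} = a_{n+1} q_n + q_{n-1}.
   cf_state alpha n = (x_n, q_n, q_{n-1}). *)
Fixpoint cf_state (a : R) (n : nat) : R * R * R :=
  match n with
  | O => (frac_part a, 1, 0)
  | S m =>
      let '(x, q, qp) := cf_state a m in
      (frac_part (/ x), IZR (Int_part (/ x)) * q + qp, q)
  end.

Definition cf_q (a : R) (n : nat) : R := snd (fst (cf_state a n)).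

(* Diophantine: irrational and sup_n ln q_{n+1} / ln q_n < oo
   (the sup taken over the n with q_n > 1, where the ratio is defined). *)
Definition diophantine (a : R) : Prop :=
  irrational a /\
  exists C : R, forall n : nat, 1 < cf_q a n ->
    ln (cf_q a (S n)) / ln (cf_q a n) <= C.

Definition resonance (a theta eps0 : R) (k : Z) : Prop :=
  distZ (2 * theta - IZR k * a) <= exp (- IZR (Z.abs k) * eps0) /\
  (forall j : Z, (Z.abs j <= Z.abs k)%Z ->
     distZ (2 * theta - IZR k * a) <= distZ (2 * theta - IZR j * a)).

(* Index set of an enumeration: all of nat (infinitely many resonances)
   or {0, ..., N-1} (finitely many). *)
Definition in_range (L : option nat) (j : nat) : Prop :=
  match L with None => True | Some N => (j < N)%nat end.

Definition resonance_enum (a theta eps0 : R) (L : option nat) (n : nat -> Z)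
  : Prop :=
  in_range L 0 /\ n O = 0%Z /\
  (forall j, in_range L (S j) -> in_range L j) /\
  (forall i j, in_range L i -> in_range L j -> n i = n j -> i = j) /\
  (forall j, in_range L j -> resonance a theta eps0 (n j)) /\
  (forall k, resonance a theta eps0 k -> exists j, in_range L j /\ n j = k) /\
  (forall j, in_range L (S j) -> (Z.abs (n j) <= Z.abs (n (S j)))%Z).

(* Main.v *)
Require Import Defs.
From Stdlib Require Import Reals Lra Lia ZArith.
Open Scope R_scope.

Lemma lnle x y : 0 < x -> x <= y -> ln x <= ln y.
Proof. intros H1 H2; destruct (Req_dec x y) as [->|]; [lra|]. left; apply ln_increasing; lra. Qed.
Lemma exple x y : x <= y -> exp x <= exp y.
Proof. intros H; destruct (Req_dec x y) as [->|]; [lra|]. left; apply exp_increasing; lra. Qed.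

Record CS := mkCS { cx : R; cq : Z; cqp : Z; cp : Z; cpp : Z }.
Fixpoint st (a : R) (n : nat) : CS :=
  match n with
  | O => mkCS (frac_part a) 1 0 (Int_part a) 1
  | S m => let s := st a m in let A := Int_part (/ cx s) in
     mkCS (frac_part (/ cx s)) (A * cq s + cqp s)%Z (cq s) (A * cp s + cpp s)%Z (cp s)
  end.

Lemma st_cf a n : cf_state a n = (cx (st a n), IZR (cq (st a n)), IZR (cqp (st a n))).
Proof.
  induction n; simpl; [reflexivity|]. rewrite IHn. simpl.
  rewrite plus_IZR, mult_IZR. reflexivity.
Qed.

Lemma cfq_st a n : cf_q a n = IZR (cq (st a n)).
Proof. unfold cf_q; rewrite st_cf; reflexivity. Qed.

Definition Inv (a : R) (n : nat) : Prop :=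
  let s := st a n in
  0 < cx s < 1 /\ (1 <= cq s)%Z /\ (0 <= cqp s <= cq s)%Z /\
  ((1 <= n)%nat -> (1 <= cqp s)%Z) /\ ((2 <= n)%nat -> (2 <= cq s)%Z) /\
  ((3 <= n)%nat -> (2 <= cqp s)%Z) /\ (Z.of_nat n <= cq s)%Z /\
  (cq s * cpp s - cqp s * cp s = 1 \/ cq s * cpp s - cqp s * cp s = -1)%Z /\
  IZR (cq s) * a - IZR (cp s) = - cx s * (IZR (cqp s) * a - IZR (cpp s)).

Lemma Int_ge1 y : 1 < y -> (1 <= Int_part y)%Z.
Proof.
  intros H. destruct (base_Int_part y) as [H1 H2].
  assert (0 < IZR (Int_part y)) by lra. apply lt_IZR in H0. lia.
Qed.

Lemma inv_all a : irrational a -> forall n, Inv a n.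
Proof.
  intros Hirr. induction n.
  - unfold Inv; simpl. destruct (base_fp a) as [F1 F2].
    assert (frac_part a <> 0).
    { intro H0. unfold frac_part in H0. apply (Hirr (Int_part a) 1%Z); [lia|].
      simpl. field_simplify. lra. }
    repeat split; try lia; try lra.
    all: try (left; lia).
    unfold frac_part. simpl. lra.
  - unfold Inv in *. simpl. set (s := st a n) in *. set (A := Int_part (/ cx s)).
    destruct IHn as (X & Q1 & QP & I1 & I2 & I3 & I4 & D & E).
    assert (HA : (1 <= A)%Z). { apply Int_ge1. rewrite <- Rinv_1. apply Rinv_lt_contravar; lra. }
    assert (Hx' : frac_part (/ cx s) = / cx s - IZR A) by reflexivity.
    assert (Enew : IZR (A * cq s + cqp s) * a - IZR (A * cp s + cpp s) =
                   - frac_part (/ cx s) * (IZR (cq s) * a - IZR (cp s))).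
    { rewrite Hx', !plus_IZR, !mult_IZR. 
      replace ((IZR A * IZR (cq s) + IZR (cqp s)) * a - (IZR A * IZR (cp s) + IZR (cpp s)))
        with (IZR A * (IZR (cq s) * a - IZR (cp s)) + (IZR (cqp s) * a - IZR (cpp s))) by ring.
      rewrite E. field. lra. }
    destruct (base_fp (/ cx s)) as [F1 F2].
    assert (frac_part (/ cx s) <> 0).
    { intro H0. rewrite H0 in Enew. apply (Hirr (A * cp s + cpp s)%Z (A * cq s + cqp s)%Z); [nia|].
      assert (IZR (A * cq s + cqp s) <> 0) by (apply not_0_IZR; nia).
      field_simplify_eq; [|auto]. lra. }
    repeat split; try lra; try nia.
Qed.

Lemma det_R a n : irrational a -> let s := st a n in
  IZR (cq s) * IZR (cpp s) - IZR (cqp s) * IZR (cp s) = 1 \/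
  IZR (cq s) * IZR (cpp s) - IZR (cqp s) * IZR (cp s) = -1.
Proof.
  intros Hi s. destruct (inv_all a Hi n) as (_&_&_&_&_&_&_&D&_). fold s in D.
  rewrite <- !mult_IZR, <- minus_IZR. destruct D as [-> | ->]; [left|right]; reflexivity.
Qed.

Lemma f_lower a n : irrational a -> let s := st a n in
  1 <= 2 * IZR (cq s) * Rabs (IZR (cqp s) * a - IZR (cpp s)).
Proof.
  intros Hi s. pose proof (det_R a n Hi) as D. fold s in D.
  destruct (inv_all a Hi n) as (X&Q1&QP&_&_&_&_&_&E). fold s in X, Q1, QP, E.
  set (f := IZR (cqp s) * a - IZR (cpp s)) in *.
  apply IZR_le in Q1. destruct QP as [QP1 QP2]. apply IZR_le in QP1. apply IZR_le in QP2.
  assert (H : IZR (cq s) * f - IZR (cqp s) * (IZR (cq s) * a - IZR (cp s)) =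
     -(IZR (cq s) * IZR (cpp s) - IZR (cqp s) * IZR (cp s))) by (unfold f; ring).
  rewrite E in H.
  assert (H2 : Rabs f * (IZR (cq s) + IZR (cqp s) * cx s) = 1).
  { replace (IZR (cq s) + IZR (cqp s) * cx s) with (Rabs (IZR (cq s) + IZR (cqp s) * cx s)).
    2:{ apply Rabs_right. nra. }
    rewrite <- Rabs_mult. replace (f * (IZR (cq s) + IZR (cqp s) * cx s)) with
      (IZR (cq s) * f - IZR (cqp s) * (- cx s * f)) by ring. rewrite H.
    destruct D as [-> | ->]; unfold Rabs; destruct Rcase_abs; lra. }
  pose proof (Rabs_pos f). assert (IZR (cqp s) * cx s <= IZR (cq s)) by nra.
  assert (Rabs f * (IZR (cq s) + IZR (cqp s) * cx s) <= Rabs f * (2 * IZR (cq s))).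
  { apply Rmult_le_compat_l; lra. } nra.
Qed.

Lemma best_approx a n : irrational a -> let s := st a n in
  forall Q P : Z, (1 <= Q < cq s)%Z ->
  Rabs (IZR (cqp s) * a - IZR (cpp s)) <= Rabs (IZR Q * a - IZR P).
Proof.
  intros Hi s Q P HQ.
  destruct (inv_all a Hi n) as (X&Q1&QP&_&_&_&_&D&E). fold s in X, Q1, QP, D, E.
  set (d := (cq s * cpp s - cqp s * cp s)%Z) in D.
  assert (Hd : (d * d = 1)%Z) by (destruct D as [-> | ->]; reflexivity).
  set (u := (d * (Q * cpp s - P * cqp s))%Z).
  set (v := (d * (P * cq s - Q * cp s))%Z).
  assert (HQu : (Q = u * cq s + v * cqp s)%Z).
  { transitivity (d * d * Q)%Z; [rewrite Hd; ring|]. unfold u, v, d; ring. }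
  assert (HPu : (P = u * cp s + v * cpp s)%Z).
  { transitivity (d * d * P)%Z; [rewrite Hd; ring|]. unfold u, v, d; ring. }
  set (f := IZR (cqp s) * a - IZR (cpp s)) in *.
  assert (HR : IZR Q * a - IZR P = IZR u * (IZR (cq s) * a - IZR (cp s)) + IZR v * f).
  { rewrite HQu, HPu, !plus_IZR, !mult_IZR. unfold f. ring. }
  rewrite HR, E.
  clearbody u v.
  assert (Hv : v <> 0%Z).
  { intro Hv0. rewrite Hv0 in HQu. destruct (Z_lt_le_dec 0 u).
    - assert (u * cq s >= cq s)%Z by nia. lia.
    - assert (u * cq s <= 0)%Z by nia. lia. }
  assert (Huv : (u * v <= 0)%Z).
  { destruct (Z_le_gt_dec (u * v) 0) as [|Hg]; [assumption|exfalso].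
    destruct (Z_lt_le_dec 0 u).
    - assert (0 < v)%Z by nia. assert (u * cq s >= cq s)%Z by nia. assert (v * cqp s >= 0)%Z by nia. lia.
    - assert (u < 0)%Z by (destruct (Z.eq_dec u 0); [subst; lia| lia]).
      assert (v < 0)%Z by nia. assert (u * cq s <= - cq s)%Z by nia. assert (v * cqp s <= 0)%Z by nia. lia. }
  replace (IZR u * (- cx s * f) + IZR v * f) with (f * (IZR v - IZR u * cx s)) by ring.
  rewrite Rabs_mult.
  assert (1 <= Rabs (IZR v - IZR u * cx s)).
  { destruct (Z_lt_le_dec 0 v).
    - assert (u <= 0)%Z by nia. apply IZR_le in H. assert (1 <= v)%Z by lia. apply IZR_le in H0.
      rewrite Rabs_right; nra.
    - assert (0 <= u)%Z by nia. apply IZR_le in H. assert (v <= -1)%Z by lia. apply IZR_le in H0.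
      rewrite Rabs_left; nra. }
  pose proof (Rabs_pos f). nra.
Qed.

Lemma find_m a : irrational a -> forall N Q, (1 <= Q < cq (st a N))%Z ->
  exists m, (cq (st a m) <= Q < cq (st a (S m)))%Z.
Proof.
  intros Hi. induction N; intros Q HQ.
  - simpl in HQ. lia.
  - destruct (Z_le_gt_dec (cq (st a N)) Q).
    + exists N; lia.
    + apply IHN; lia.
Qed.

Lemma cqp_S a m : cqp (st a (S m)) = cq (st a m).
Proof. reflexivity. Qed.

Lemma dio_bound a : diophantine a -> exists K D, 1 <= K /\ 1 <= D /\
  forall Q P : Z, Q <> 0%Z ->
  1 <= 2 * K * exp (D * ln (IZR (Z.abs Q))) * Rabs (IZR Q * a - IZR P).
Proof.
  intros [Hi [C HC]].
  pose proof (inv_all a Hi 1) as I1. pose proof (inv_all a Hi 2) as I2.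
  destruct I1 as (_&A1&_). destruct I2 as (_&A2&_).
  set (K := IZR (cq (st a 1) + cq (st a 2))).
  set (D := Rmax C 1).
  assert (HK : 2 <= K) by (unfold K; apply IZR_le; lia).
  assert (HD : 1 <= D) by apply Rmax_r.
  assert (pos : forall Q P : Z, (1 <= Q)%Z ->
    1 <= 2 * K * exp (D * ln (IZR Q)) * Rabs (IZR Q * a - IZR P)).
  { intros Q P HQ.
    destruct (find_m a Hi (S (Z.to_nat Q)) Q) as [m Hm].
    { split; [lia|]. destruct (inv_all a Hi (S (Z.to_nat Q))) as (_&_&_&_&_&_&I4&_). lia. }
    pose proof (best_approx a (S m) Hi Q P) as BA. cbv zeta in BA. rewrite cqp_S in BA.
    pose proof (f_lower a (S m) Hi) as FL. cbv zeta in FL. rewrite cqp_S in FL.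
    set (q' := IZR (cq (st a (S m)))) in *.
    set (f := Rabs (IZR (cq (st a m)) * a - IZR (cpp (st a (S m))))) in *.
    set (r := Rabs (IZR Q * a - IZR P)).
    assert (Hf : f <= r) by (apply BA; lia).
    assert (HQR : 1 <= IZR Q) by (apply IZR_le; lia).
    assert (HlQ : 0 <= ln (IZR Q)) by (rewrite <- ln_1; apply lnle; lra).
    assert (Hq' : q' <= K * exp (D * ln (IZR Q))).
    { destruct (Z_lt_le_dec 1 (cq (st a m))) as [Hgt | Hle].
      - pose proof (HC m) as H. rewrite !cfq_st in H.
        assert (Hm1 : 1 < IZR (cq (st a m))) by (apply IZR_lt; lia).
        specialize (H Hm1). fold q' in H.
        assert (Hlm : 0 < ln (IZR (cq (st a m)))) by (rewrite <- ln_1; apply ln_increasing; lra).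
        assert (Hq'p : 0 < q') by (unfold q'; apply IZR_lt; destruct (inv_all a Hi (S m)) as (_&B&_); lia).
        assert (ln q' <= C * ln (IZR (cq (st a m)))).
        { replace (ln q') with (ln q' / ln (IZR (cq (st a m))) * ln (IZR (cq (st a m)))) by (field; lra).
          apply Rmult_le_compat_r; lra. }
        assert (C * ln (IZR (cq (st a m))) <= D * ln (IZR (cq (st a m)))).
        { apply Rmult_le_compat_r; [lra| apply Rmax_l]. }
        assert (ln (IZR (cq (st a m))) <= ln (IZR Q)) by (apply lnle; [lra| apply IZR_le; lia]).
        assert (ln q' <= D * ln (IZR Q)) by nra.
        rewrite <- (exp_ln q') by lra.
        pose proof (exple _ _ H3). pose proof (exp_pos (D * ln (IZR Q))). nra.
      - assert (E1 : 1 <= exp (D * ln (IZR Q))).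
        { rewrite <- exp_0. apply exple. nra. }
        assert (q' <= K).
        { destruct m as [|[|m]].
          - unfold q', K. apply IZR_le. lia.
          - unfold q', K. apply IZR_le. lia.
          - destruct (inv_all a Hi (S (S m))) as (_&_&_&_&B&_). assert (2 <= S (S m))%nat by lia. specialize (B H). lia. }
        nra. }
    pose proof (Rabs_pos (IZR Q * a - IZR P)). fold r in H.
    assert (0 <= q') by (unfold q'; apply IZR_le; destruct (inv_all a Hi (S m)) as (_&B&_); lia).
    assert (1 <= 2 * q' * r).
    { apply Rle_trans with (2 * q' * f); [exact FL|]. apply Rmult_le_compat_l; lra. }
    nra. }
  exists K, D. split; [lra|]. split; [lra|]. intros Q P HQ.
  destruct (Z_lt_le_dec 0 Q).
  - rewrite Z.abs_eq by lia. apply pos. lia.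
  - rewrite Z.abs_neq by lia. pose proof (pos (- Q)%Z (- P)%Z ltac:(lia)) as H.
    rewrite !opp_IZR in H. replace (- IZR Q * a - - IZR P) with (- (IZR Q * a - IZR P)) in H by ring.
    rewrite Rabs_Ropp in H. rewrite opp_IZR. exact H.
Qed.

Lemma distZ_rep y : exists P : Z, distZ y = Rabs (y - IZR P).
Proof.
  unfold distZ. destruct (base_fp y) as [F1 F2]. unfold frac_part in *.
  unfold Rmin; destruct (Rle_dec _ _).
  - exists (Int_part y). rewrite Rabs_right; lra.
  - exists (Int_part y + 1)%Z. rewrite plus_IZR. rewrite Rabs_left; lra.
Qed.

Lemma distZ_bounds y : 0 <= distZ y <= 1/2.
Proof.
  unfold distZ. destruct (base_fp y) as [F1 F2].
  unfold Rmin; destruct (Rle_dec _ _); lra.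
Qed.

Theorem lemma3p1 :
  forall alpha : R, diophantine alpha ->
  forall eps0 : R, 0 < eps0 ->
  exists c : R, 0 < c /\
  forall (theta : R) (L : option nat) (n : nat -> Z),
    resonance_enum alpha theta eps0 L n ->
    (forall j : nat, in_range L (S j) ->
       0 < distZ (2 * theta - IZR (n j) * alpha) /\
       c * Rpower (distZ (2 * theta - IZR (n j) * alpha)) (- c)
         <= IZR (Z.abs (n (S j)))) /\
    (forall j : nat, in_range L j ->
       0 < distZ (2 * theta - IZR (n j) * alpha) ->
       c * exp (c * eps0 * IZR (Z.abs (n j)))
         <= c * Rpower (distZ (2 * theta - IZR (n j) * alpha)) (- c)).
Proof.
  intros alpha Hd eps0 He.
  destruct (dio_bound alpha Hd) as (K&D&HK&HD&B).
  set (c := Rmin (/ D) (exp (- ln 2 - ln (4 * K) / D))).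
  assert (HiD : 0 < / D) by (apply Rinv_0_lt_compat; lra).
  assert (Hc : 0 < c) by (unfold c; apply Rmin_glb_lt; [lra| apply exp_pos]).
  assert (Hc1 : c <= / D) by apply Rmin_l.
  assert (Hc2 : c <= exp (- ln 2 - ln (4 * K) / D)) by apply Rmin_r.
  exists c. split; [exact Hc|].
  intros theta L n (R0 & N0 & Rdown & Inj & Res & Compl & Mono).
  split.
  - intros j Hj. pose proof (Rdown j Hj) as Hj0.
    set (m := n j) in *. set (k := n (S j)) in *.
    assert (Hmk : (Z.abs m <= Z.abs k)%Z) by (apply Mono; exact Hj).
    assert (Hneq : k <> m).
    { intro Heq. assert (S j = j) by (apply Inj; auto). lia. }
    destruct (Res (S j) Hj) as [_ Rk]. fold k in Rk.
    specialize (Rk m Hmk).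
    set (dm := distZ (2 * theta - IZR m * alpha)) in *.
    set (dk := distZ (2 * theta - IZR k * alpha)) in *.
    destruct (distZ_rep (2 * theta - IZR m * alpha)) as [Pm HPm].
    destruct (distZ_rep (2 * theta - IZR k * alpha)) as [Pk HPk].
    fold dm in HPm. fold dk in HPk.
    assert (Htri : Rabs (IZR (k - m) * alpha - IZR (Pm - Pk)) <= 2 * dm).
    { replace (IZR (k - m) * alpha - IZR (Pm - Pk)) with
        ((2 * theta - IZR m * alpha - IZR Pm) + - (2 * theta - IZR k * alpha - IZR Pk))
        by (rewrite !minus_IZR; ring).
      eapply Rle_trans; [apply Rabs_triang|]. rewrite Rabs_Ropp. lra. }
    assert (HQ : (k - m <> 0)%Z) by lia.
    specialize (B (k - m)%Z (Pm - Pk)%Z HQ).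
    set (lQ := ln (IZR (Z.abs (k - m)))) in *.
    pose proof (exp_pos (D * lQ)) as HE.
    pose proof (Rabs_pos (IZR (k - m) * alpha - IZR (Pm - Pk))).
    assert (Hprod : 1 <= 4 * K * exp (D * lQ) * dm).
    { apply Rle_trans with (1 := B).
      replace (4 * K * exp (D * lQ) * dm) with (2 * K * exp (D * lQ) * (2 * dm)) by ring.
      apply Rmult_le_compat_l; [nra | exact Htri]. }
    pose proof (distZ_bounds (2 * theta - IZR m * alpha)) as Db. fold dm in Db.
    assert (Hdm : 0 < dm).
    { destruct (Req_dec dm 0) as [E0|]; [|lra]. rewrite E0 in Hprod. lra. }
    split; [exact Hdm|].
    assert (Hsum : 0 <= ln (4 * K) + D * lQ + ln dm).
    { destruct (Rle_dec 0 (ln (4 * K) + D * lQ + ln dm)) as [|Hn]; [assumption|exfalso].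
      assert (exp (ln (4 * K) + D * lQ + ln dm) < exp 0) by (apply exp_increasing; lra).
      rewrite exp_0, !exp_plus, exp_ln, exp_ln in H0 by lra. lra. }
    assert (HkZ : (1 <= Z.abs k)%Z) by lia.
    assert (HkR : 1 <= IZR (Z.abs k)) by (apply IZR_le; lia).
    assert (HQR : 1 <= IZR (Z.abs (k - m))) by (apply IZR_le; lia).
    assert (HQk : lQ <= ln 2 + ln (IZR (Z.abs k))).
    { rewrite <- ln_mult by lra. unfold lQ. apply lnle; [lra|].
      rewrite <- mult_IZR. apply IZR_le. lia. }
    assert (Hlc : ln c <= - ln 2 - ln (4 * K) / D).
    { rewrite <- (ln_exp (- ln 2 - ln (4 * K) / D)). apply lnle; lra. }
    assert (Hld : ln dm <= 0).
    { rewrite <- ln_1. apply lnle; lra. }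
    assert (H1 : - c * ln dm <= - (/ D) * ln dm) by nra.
    assert (H2 : - (ln (4 * K) + ln dm) * / D <= lQ).
    { assert (- (ln (4 * K) + ln dm) <= D * lQ) by lra.
      apply Rmult_le_compat_r with (r := / D) in H0; [|lra].
      replace (D * lQ * / D) with lQ in H0 by (field; lra). exact H0. }
    assert (Hfin : ln c + - c * ln dm <= ln (IZR (Z.abs k))).
    { unfold Rdiv in Hlc. nra. }
    unfold Rpower. rewrite <- (exp_ln c) at 1 by lra.
    rewrite <- exp_plus. rewrite <- (exp_ln (IZR (Z.abs k))) by lra.
    apply exple. replace (- c * ln dm) with (- c * ln dm) in Hfin by ring. exact Hfin.
  - intros j Hj Hd0.
    destruct (Res j Hj) as [R1 _].
    unfold Rpower. apply Rmult_le_compat_l; [lra|]. apply exple.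
    assert (ln (distZ (2 * theta - IZR (n j) * alpha)) <= - IZR (Z.abs (n j)) * eps0).
    { rewrite <- (ln_exp (- IZR (Z.abs (n j)) * eps0)). apply lnle; assumption. }
    nra.
Qed.
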